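(* Let $\vec d=(\vec a,\vec b)$ be a bidegree sequence of length $n$ with $\sum_i a_i=\sum_i b_i=n\bar c$, and let $M=\max\vec d$ with $M<n$. (i) If $k:=\#\{i: a_i=M\}$ satisfies $M\le k$, then $\vec d$ is graphic with loops. (ii) More generally, if there is $k\in\mathbb{N}$ with $M\le k$ and $Mk\le n\bar c$, then $\vec d$ is graphic with loops.
   Context: A bidegree sequence of length $n$ is a pair $\vec d=(\vec a,\vec b)$ with $\vec a=(a_1,\dots,a_n)\in\mathbb{N}_0^n$ and $\vec b=(b_1,\dots,b_n)\in\mathbb{N}_0^n$. It is graphic with loops if there is an $n\times n$ matrix with entries in $\{0,1\}$ whose $i$th row sum is $a_i$ and whose $i$th column sum is $b_i$ for every $i\in[1..n]$; it is graphic if such a matrix exists with all diagonal entries equal to $0$. $\max\vec d$ and $\min\vec d$ denote the maximum and minimum over all $2n$ entries $a_1,\dots,a_n,b_1,\dots,b_n$. The number $\bar c$ (the average degree) is defined by $\sum_i a_i=\sum_i b_i=n\bar c$. *)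

(* Defs.v *)
From mathcomp Require Import all_boot all_order all_algebra.
Set Implicit Arguments. Unset Strict Implicit. Unset Printing Implicit Defensive.

(* A bidegree sequence of length n is a pair (a, b) of functions 'I_n -> nat. *)

Definition graphic_with_loops (n : nat) (a b : 'I_n -> nat) : Prop :=
  exists A : 'M[bool]_n,
    (forall i : 'I_n, \sum_(j < n) (A i j : nat) = a i) /\
    (forall j : 'I_n, \sum_(i < n) (A i j : nat) = b j).

(* max over all 2n entries a_1..a_n, b_1..b_n (0 when n = 0). *)
Definition maxd (n : nat) (a b : 'I_n -> nat) : nat :=
  \max_(i < n) maxn (a i) (b i).

(* Main.v *)
Require Import Defs.
From mathcomp Require Import all_boot all_order all_algebra.
From mathcomp Require Import zify.
Set Implicit Arguments. Unset Strict Implicit. Unset Printing Implicit Defensive.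

Definition eC (q r C : nat) := C * q + minn C r.

Lemma eCS q r C : eC q r C.+1 = eC q r C + q + (C < r).
Proof. rewrite /eC mulSn; case: ltnP => h; lia. Qed.

Lemma eC_mono q r C C' : C <= C' -> eC q r C <= eC q r C'.
Proof. rewrite /eC => h; apply: leq_add; [exact: leq_mul|lia]. Qed.

Definition phiq M q r p := eC q r (p %% M).+1 - (p %/ M).+1.

Section Phi.
Variables (M q r : nat).
Hypotheses (M0 : 0 < M) (rM : r < M) (Mq : M <= q).
Let S := q * M + r.

Lemma rowbound p : p < S -> (p %/ M).+1 <= q + (p %% M < r).
Proof.
move=> pS. have := divn_eq p M. have := ltn_pmod p M0.
move: (p %/ M) (p %% M) => R C CM pE.
case: ltnP => Cr.
- have : R <= q; last lia.
  case: (leqP R q) => // H. have : (q.+1) * M <= R * M by exact: leq_mul. rewrite /S in pS; nia.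
- have : R < q; last lia.
  case: (ltnP R q) => // H. have : q * M <= R * M by exact: leq_mul. rewrite /S in pS; nia.
Qed.

Lemma phi_in p : p < S -> eC q r (p %% M) <= phiq M q r p < eC q r (p %% M).+1.
Proof.
move=> pS; have := rowbound pS; rewrite /phiq eCS.
move: (nat_of_bool _) (eC _ _ _) (p %/ M) => b e R; lia.
Qed.

Lemma eC_top : eC q r M = S.
Proof. rewrite /eC /S. have -> : minn M r = r by lia. by rewrite mulnC. Qed.

Lemma phi_lt p : p < S -> phiq M q r p < S.
Proof.
move=> pS; have /andP[_ h] := phi_in pS; rewrite -eC_top.
apply: (leq_trans h); apply: eC_mono; exact: ltn_pmod.
Qed.

Lemma phi_inj x y : x < S -> y < S -> phiq M q r x = phiq M q r y -> x = y.
Proof.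
move=> xS yS E.
have /andP[x1 x2] := phi_in xS; have /andP[y1 y2] := phi_in yS.
have hx := rowbound xS; have hy := rowbound yS.
case: (ltngtP (x %% M) (y %% M)) => C.
- have := eC_mono q r C; lia.
- have := eC_mono q r C; lia.
- rewrite (divn_eq x M) (divn_eq y M) C; congr (_ * _ + _).
  move: E hx hy; rewrite /phiq C eCS.
  move: (nat_of_bool _) (eC _ _ _) (x %/ M) (y %/ M) => b e R1 R2; lia.
Qed.

Lemma phi_far x y : x < y -> y < S -> y < x + M ->
  phiq M q r y + M <= phiq M q r x \/ phiq M q r x + M <= phiq M q r y.
Proof.
move=> xy yS yxM.
have xS : x < S by lia.
have hx := rowbound xS; have hy := rowbound yS.
have ex := divn_eq x M; have ey := divn_eq y M.
have cx := ltn_pmod x M0; have cy := ltn_pmod y M0.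
have d1 : x %/ M <= y %/ M by apply: leq_div2r; lia.
have d2 : y %/ M <= (x %/ M).+1.
  have : y %/ M <= (x + M) %/ M by apply: leq_div2r; lia.
  by rewrite divnDr ?dvdnn // divnn M0 addn1.
rewrite /phiq.
move: ex ey cx cy d1 d2 hx hy.
move: (x %/ M) (x %% M) (y %/ M) (y %% M) => R1 C1 R2 C2 ex ey cx cy d1 d2 hx hy.
have nt1 : R1.+1 <= eC q r C1.+1.
  rewrite eCS; move: hx; move: (nat_of_bool _) (eC _ _ _) => b e; lia.
have nt2 : R2.+1 <= eC q r C2.+1.
  rewrite eCS; move: hy; move: (nat_of_bool _) (eC _ _ _) => b e; lia.
have [E|ne] := eqVneq R2 R1.
- subst R2.
  have C12 : C1 < C2.
    move: ex ey xy; move: (R1 * M) => T. lia.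
  right. have h : eC q r C1.+2 <= eC q r C2.+1 by apply: eC_mono.
  move: h; rewrite eCS.
  move: nt1 nt2 Mq; move: (nat_of_bool _) (eC q r C1.+1) (eC q r C2.+1) => b e1 e2; lia.
- have E : R2 = R1.+1 by lia.
  subst R2.
  have C21 : C2 < C1.
    move: ex ey yxM; rewrite mulSn; move: (R1 * M) => T. lia.
  left. have h : eC q r C2.+2 <= eC q r C1.+1 by apply: eC_mono.
  move: h; rewrite eCS.
  move: nt1 nt2 Mq; move: (nat_of_bool _) (eC q r C1.+1) (eC q r C2.+1) => b e1 e2; lia.
Qed.
End Phi.

Lemma phi_exists M S : M * M <= S -> exists phi : nat -> nat,
  (forall x, x < S -> phi x < S) /\
  (forall x y, x < S -> y < S -> phi x = phi y -> x = y) /\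
  (forall x y, x < y -> y < S -> y < x + M ->
     phi y + M <= phi x \/ phi x + M <= phi y).
Proof.
case: (posnP M) => [->|M0] H.
  exists id; split=> //; split=> // x y; lia.
have rM := ltn_pmod S M0.
have Mq : M <= S %/ M by rewrite leq_divRL.
have eS : S = S %/ M * M + S %% M := divn_eq S M.
exists (phiq M (S %/ M) (S %% M)); split; [|split].
- move=> x; have := phi_lt M0 rM Mq (p:=x); by rewrite -eS.
- move=> x y; have := phi_inj M0 rM Mq (x:=x) (y:=y); by rewrite -eS.
- move=> x y; have := phi_far M0 rM Mq (x:=x) (y:=y); by rewrite -eS.
Qed.

Definition pre n (c : 'I_n -> nat) (i : 'I_n) := \sum_(k < n | k < i) c k.

Lemma pre_split n (c : 'I_n -> nat) (i : 'I_n) : pre c i + c i <= \sum_k c k.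
Proof.
rewrite /pre [X in _ <= X](bigID (fun k : 'I_n => k < i)) /=; apply: leq_add => //.
by rewrite (bigD1 i) /= ?ltnn // leq_addr.
Qed.

Lemma pre_mono n (c : 'I_n -> nat) (i j : 'I_n) : i < j -> pre c i + c i <= pre c j.
Proof.
move=> ij; rewrite {2}/pre (bigID (fun k : 'I_n => k < i)) /=; apply: leq_add.
  rewrite /pre; apply: eq_leq; apply: eq_bigl => k; case: (ltnP k i) => h; rewrite ?andbT ?andbF //.
  by rewrite (ltn_trans h ij).
by rewrite (bigD1 i) /= ?ltnn ?ij // leq_addr.
Qed.

Lemma pre_uniq n (c : 'I_n -> nat) (j j' : 'I_n) u u' :
  u < c j -> u' < c j' -> pre c j + u = pre c j' + u' -> j = j' /\ u = u'.
Proof.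
move=> h h' e; case: (ltngtP j j') => jj.
- have := pre_mono c jj; lia.
- have := pre_mono c jj; lia.
- have E : j = j' by apply: val_inj.
  subst j'; split=> //; lia.
Qed.

Lemma sum_ltn n m : \sum_(u < n) (u < m) = minn n m.
Proof. elim: n => [|n IH]; first by rewrite big_ord0; lia.
rewrite big_ord_recr /= IH; case: ltnP => h; lia. Qed.

Lemma sum_pick S x0 (f : nat -> bool) : x0 < S -> \sum_(y < S) ((x0 == y) && f y) = f x0.
Proof.
move=> h; rewrite (bigD1 (Ordinal h)) //= eqxx /= big1 ?addn0 // => y ne.
case: eqP => // e; case/negP: ne; apply/eqP; exact: val_inj.
Qed.

Lemma recr (N : nat -> nat) S : \sum_(y < S.+1) N y = \sum_(y < S) N y + N S.
Proof. by rewrite big_ord_recr. Qed.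

Lemma sum_eq1 S x0 : x0 < S -> \sum_(y < S) (x0 == y : nat) = 1.
Proof.
move=> h; have := sum_pick (fun _ => true) h => /= <-; apply: eq_bigr => y _; by rewrite andbT.
Qed.

Lemma sum_le_card S (N : nat -> nat) : (forall y, y < S -> N y <= 1) -> \sum_(y < S) N y <= S.
Proof.
elim: S => [|S IH] H; rewrite ?big_ord0 // big_ord_recr /=.
rewrite -addn1; apply: leq_add; [exact: IH (fun y hy => H y (ltnW hy))| exact: H S (ltnSn S)].
Qed.

Lemma all_ones S (N : nat -> nat) : (forall y, y < S -> N y <= 1) ->
  \sum_(y < S) N y = S -> forall y, y < S -> N y = 1.
Proof.
elim: S => [|S IH] H; first by [].
rewrite recr => E y.
have H' : forall y, y < S -> N y <= 1 by move=> z hz; apply: H; exact: ltnW.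
have := sum_le_card H'; have := H S (ltnSn S) => h1 h2.
rewrite ltnS leq_eqVlt => /orP[/eqP ->|hy]; first lia.
apply: IH => //; lia.
Qed.

Lemma sum_le1 (T : finType) (P : pred T) :
  (forall x y, P x -> P y -> x = y) -> \sum_x (P x : nat) <= 1.
Proof.
move=> H; have -> : \sum_x (P x : nat) = #|P|.
  rewrite -sum1_card [RHS]big_mkcond /=; apply: eq_bigr => x _; rewrite unfold_in; by case: (P x).
by apply/card_le1_eqP => x y hx hy; apply: H hy hx.
Qed.

Definition cnt n (c : 'I_n -> nat) (y : nat) :=
  \sum_(j < n) \sum_(u < n) ((u < c j) && (pre c j + u == y)).

Lemma cnt1 n (c : 'I_n -> nat) : (forall j, c j <= n) ->
  forall y, y < \sum_j c j -> cnt c y = 1.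
Proof.
move=> cn; apply: all_ones.
- move=> y _; rewrite /cnt pair_bigA /=; apply: sum_le1 => [[j u] [j' u']] /=.
  move=> /andP[h /eqP e] /andP[h' /eqP e'].
  have [E1 E2] := pre_uniq h h' (etrans e (esym e')).
  by rewrite E1 (val_inj E2).
- rewrite /cnt exchange_big /=.
  under eq_bigr => j _ do rewrite exchange_big /=.
  transitivity (\sum_(j < n) c j); last by [].
  apply: eq_bigr => j _.
  transitivity (\sum_(u < n) (u < c j : nat)); last by rewrite sum_ltn; have := cn j; lia.
  apply: eq_bigr => u _; case: ltnP => hu /=.
  + have hlt : pre c j + u < \sum_k c k by have := pre_split c j; lia.
    exact: sum_eq1.
  + by rewrite big1.
Qed.

Lemma b1 (x : nat) : x <= 1 -> ((x == 1) : nat) = x.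
Proof. by case: x => [|[|]]. Qed.

Lemma construct n (a b : 'I_n -> nat) M :
  (forall i, a i <= M) -> (forall j, b j <= M) -> M < n ->
  \sum_i a i = \sum_i b i -> M * M <= \sum_i a i -> graphic_with_loops a b.
Proof.
move=> aM bM Mn hab MS.
set S := \sum_i a i in hab MS.
have [phi [phiS [phiI phiF]]] := phi_exists MS.
have an : forall i, a i <= n by move=> i; have := aM i; lia.
have bn : forall j, b j <= n by move=> j; have := bM j; lia.
pose E i j (t u : 'I_n) := (t < a i) && (u < b j) && (pre b j + u == phi (pre a i + t)).
pose N i j := \sum_(t < n) \sum_(u < n) (E i j t u : nat).
have N1 : forall i j, N i j <= 1.
  move=> i j; rewrite /N pair_bigA /=; apply: sum_le1 => [[t u] [t' u']] /=.
  move=> /andP[/andP[ht hu] /eqP e] /andP[/andP[ht' hu'] /eqP e'].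
  have hpa := pre_split a i.
  have hu1 := bM j.
  have htt : t = t' :> nat.
    case: (ltngtP t t') => htt //.
    - have := phiF (pre a i + t) (pre a i + t').
      rewrite -e -e'; have := aM i; lia.
    - have := phiF (pre a i + t') (pre a i + t).
      rewrite -e -e'; have := aM i; lia.
  have E1 : t = t' by apply: val_inj.
  subst t'; have E2 : u = u'.
    by apply: val_inj; apply/eqP; rewrite -(eqn_add2l (pre b j)) e e'.
  by rewrite E2.
exists (\matrix_(i, j) (N i j == 1))%R; split.
- move=> i.
  under eq_bigr => j _ do rewrite mxE b1 ?N1 //.
  rewrite /N exchange_big /=.
  transitivity (\sum_(t < n) (t < a i : nat)); last by rewrite sum_ltn; have := an i; lia.
  apply: eq_bigr => t _; rewrite /E.
  case: (ltnP t (a i)) => ht /=; last by rewrite big1 // => j _; rewrite big1.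
  have hy : phi (pre a i + t) < \sum_j b j.
    rewrite -hab; apply: phiS; have := pre_split a i; lia.
  exact: (cnt1 bn hy).
- move=> j.
  under eq_bigr => i _ do rewrite mxE b1 ?N1 //.
  rewrite /N.
  under eq_bigr => i _ do rewrite exchange_big /=.
  rewrite exchange_big /=.
  transitivity (\sum_(u < n) (u < b j : nat)); last by rewrite sum_ltn; have := bn j; lia.
  apply: eq_bigr => u _; rewrite /E.
  case: (ltnP u (b j)) => hu /=; last first.
    by rewrite big1 // => i _; rewrite big1 // => t _; rewrite andbF.
  set y := pre b j + u.
  have yS : y < S by rewrite hab; have := pre_split b j; rewrite /y; lia.
  under eq_bigr => i _ do under eq_bigr => t _ do rewrite andbT.
  transitivity (\sum_(x < S) (phi x == y : nat)).
    transitivity (\sum_(i < n) \sum_(t < n) \sum_(x < S)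
       (((t < a i) && (pre a i + t == x)) && (phi x == y) : nat)).
      apply: eq_bigr => i _; apply: eq_bigr => t _.
      case: (ltnP t (a i)) => ht /=; last by rewrite big1.
      have hp : pre a i + t < S by have := pre_split a i; rewrite -/S; lia.
      rewrite (sum_pick (fun x => phi x == y) hp) eq_sym //.
    rewrite exchange_big /=. under eq_bigr => i _ do rewrite exchange_big /=.
    rewrite exchange_big /=.
    apply: eq_bigr => x _.
    have cx := cnt1 an (ltn_ord x).
    have [hx|hx] := eqVneq (phi x) y; last first.
      by rewrite big1 // => t _; rewrite big1 // => i _; rewrite andbF.
    rewrite /= -[RHS]cx /cnt exchange_big; apply: eq_bigr => i _; apply: eq_bigr => t _; by rewrite andbT.
  apply: (@all_ones S (fun y => \sum_(x < S) (phi x == y : nat))) => //.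
  + move=> z _; apply: sum_le1 => x x' /eqP e /eqP e'.
    apply: val_inj; apply: phiI; [exact: ltn_ord|exact: ltn_ord|by rewrite /= e e'].
  + rewrite exchange_big /=.
    transitivity (\sum_(x < S) 1); last by rewrite sum1_card card_ord.
    apply: eq_bigr => x _.
    rewrite -(sum_eq1 (phiS x (ltn_ord x))); apply: eq_bigr => z _; by rewrite eq_sym.
Qed.

Theorem corollary2 (n : nat) (a b : 'I_n -> nat) :
  \sum_(i < n) a i = \sum_(i < n) b i ->
  maxd a b < n ->
  (maxd a b <= #|[pred i : 'I_n | a i == maxd a b]| -> graphic_with_loops a b) /\
  (forall k : nat, maxd a b <= k -> maxd a b * k <= \sum_(i < n) a i ->
     graphic_with_loops a b).
Proof.
move=> hab Mn.
set M := maxd a b.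
have aM : forall i, a i <= M.
  move=> i; apply: leq_trans (leq_maxl (a i) (b i)) _.
  rewrite /M /maxd; exact: (@leq_bigmax _ (fun i => maxn (a i) (b i)) i).
have bM : forall i, b i <= M.
  move=> i; apply: leq_trans (leq_maxr (a i) (b i)) _.
  rewrite /M /maxd; exact: (@leq_bigmax _ (fun i => maxn (a i) (b i)) i).
have ii : forall k : nat, M <= k -> M * k <= \sum_(i < n) a i -> graphic_with_loops a b.
  move=> k Mk MkS; apply: (construct aM bM Mn hab).
  apply: leq_trans MkS; exact: leq_mul.
split=> // Mk; apply: (ii _ Mk).
rewrite (bigID (fun i => a i == M)) /=.
apply: leq_trans (leq_addr _ _).
rewrite (eq_bigr (fun _ => M)); last by move=> i /eqP.
by rewrite sum_nat_const mulnC.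
Qed.
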